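(* The sequence $(C_n)_{n\ge1}$ is strictly increasing.
   Context: For $n\ge1$ and $\mathbf{x}=(x_1,\dots,x_n)\in(0,\infty)^n$ let $f_n(\mathbf{x})=\sum_{i=1}^n x_i+\sum_{1\le i\le j\le n}\prod_{k=i}^j \frac1{x_k}$, $A_n=\inf_{\mathbf{x}\in(0,\infty)^n} f_n(\mathbf{x})$, and $C_n=3n-A_n$. *)

(* Defs.v *)
From HB Require Import structures.
From mathcomp Require Import all_boot all_order all_algebra.
From mathcomp Require Import classical_sets reals.
Set Implicit Arguments. Unset Strict Implicit. Unset Printing Implicit Defensive.
Import Order.TTheory GRing.Theory Num.Theory.
Local Open Scope ring_scope.
Local Open Scope classical_set_scope.

(* Indices are 0-based: x : 'I_n -> R stands for (x_1,...,x_n). *)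
Definition f (R : realType) (n : nat) (x : 'I_n -> R) : R :=
  \sum_(i < n) x i +
  \sum_(i < n) \sum_(j < n | (i <= j)%N)
     \prod_(k < n | (i <= k <= j)%N) (x k)^-1.

Definition A (R : realType) (n : nat) : R :=
  inf [set f x | x in [set x : 'I_n -> R | forall i, 0 < x i]].

Definition C (R : realType) (n : nat) : R := 3 * n%:R - A R n.

(* Main.v *)
Require Import Defs.
From HB Require Import structures.
From mathcomp Require Import all_boot all_order all_algebra.
From mathcomp Require Import classical_sets reals.
From mathcomp Require Import topology normedtype derive.
From mathcomp Require Import ring lra zify.
Set Implicit Arguments. Unset Strict Implicit. Unset Printing Implicit Defensive.
Import Order.TTheory GRing.Theory Num.Theory.
Import numFieldNormedType.Exports.
Local Open Scope ring_scope.

Section Lists.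
Variable R : realType.
Implicit Types (l r s : seq R) (a b c t : R).

Fixpoint Pl s := if s is a :: l then a^-1 * Pl l else 1.
Fixpoint Rb s := if s is a :: l then a^-1 * (1 + Rb l) else 0.
Fixpoint Le s := if s is a :: l then Le l + a^-1 * Pl l else 0.
Fixpoint G s := if s is a :: l then Rb (a :: l) + G l else 0.
Definition F s := \sum_(a <- s) a + G s.

Lemma Pl_cat l r : Pl (l ++ r) = Pl l * Pl r.
Proof. by elim: l => [|a l IH] /=; rewrite ?mul1r // IH mulrA. Qed.

Lemma Rb_cat l r : Rb (l ++ r) = Rb l + Pl l * Rb r.
Proof. elim: l => [|a l IH] /=; first by rewrite add0r mul1r. rewrite IH; ring. Qed.

Lemma Le_cat l r : Le (l ++ r) = Le r + Pl r * Le l.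
Proof. elim: l => [|a l IH] /=; first by rewrite mulr0 addr0. rewrite IH Pl_cat; ring. Qed.

Lemma G_cat l r : G (l ++ r) = G l + G r + Le l * Rb r.
Proof.
elim: l => [|a l IH] /=; first by rewrite add0r mul0r addr0.
rewrite IH Rb_cat; ring.
Qed.

Lemma F_cat l r : F (l ++ r) = F l + F r + Le l * Rb r.
Proof. rewrite /F big_cat G_cat /=; ring. Qed.

Lemma F_ins l t r : F (l ++ t :: r) = F l + F r + t + (1 + Le l) * (1 + Rb r) / t.
Proof.
rewrite F_cat (F_cat [:: t] r) /F /= big_cons big_nil /=; ring.
Qed.

Lemma Pl_rev l : Pl (rev l) = Pl l.
Proof. elim: l => [|a l IH] //=; rewrite rev_cons -cats1 Pl_cat IH /=; ring. Qed.

Lemma Rb_rev l : Rb (rev l) = Le l.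
Proof. elim: l => [|a l IH] //=; rewrite rev_cons -cats1 Rb_cat IH Pl_rev /=; ring. Qed.

Lemma Le_rev l : Le (rev l) = Rb l.
Proof. elim: l => [|a l IH] //=; rewrite rev_cons -cats1 Le_cat IH /=; ring. Qed.

Lemma G_rev l : G (rev l) = G l.
Proof.
elim: l => [|a l IH] //=; rewrite rev_cons -cats1 G_cat IH Le_rev /=; ring.
Qed.

Lemma F_rev l : F (rev l) = F l.
Proof. by rewrite /F G_rev big_rev. Qed.

Definition posl s := all (fun a => 0 < a) s.

Lemma Pl_gt0 s : posl s -> 0 < Pl s.
Proof. elim: s => [|a s IH] //= /andP[a0 /IH h]; by apply: mulr_gt0 => //; rewrite invr_gt0. Qed.

Lemma Rb_ge0 s : posl s -> 0 <= Rb s.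
Proof.
elim: s => [|a s IH] //= /andP[a0 /IH h]; apply: mulr_ge0.
  by rewrite invr_ge0 ltW.
by rewrite addr_ge0.
Qed.

Lemma Le_ge0 s : posl s -> 0 <= Le s.
Proof.
elim: s => [|a s IH] //= /andP[a0 h]; rewrite addr_ge0 ?IH //; apply: mulr_ge0.
  by rewrite invr_ge0 ltW.
by rewrite ltW // Pl_gt0.
Qed.

Lemma G_ge0 s : posl s -> 0 <= G s.
Proof.
elim: s => [|a s IH] //= /andP[a0 h]; rewrite addr_ge0 ?IH //.
by apply: (Rb_ge0 (s := a :: s)); rewrite /= a0.
Qed.

Lemma F_ge0 s : posl s -> 0 <= F s.
Proof.
move=> h; rewrite /F addr_ge0 ?G_ge0 //.
elim: s h => [|a s IH] /=; first by rewrite big_nil.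
by case/andP=> a0 h; rewrite big_cons addr_ge0 ?IH // ltW.
Qed.


Lemma CS (u v p1 q1 p2 q2 : R) : 0 <= u -> 0 <= v -> 0 <= p1 -> 0 <= q1 -> 0 <= p2 -> 0 <= q2 ->
  u ^+ 2 <= p1 * q1 -> v ^+ 2 <= p2 * q2 -> (u + v) ^+ 2 <= (p1 + p2) * (q1 + q2).
Proof.
move=> u0 v0 p10 q10 p20 q20 hu hv.
have h1 : (2 * u * v) ^+ 2 <= (p1 * q2 + p2 * q1) ^+ 2.
  have : (u * v) ^+ 2 <= (p1 * q2) * (p2 * q1).
    rewrite exprMn; have -> : p1 * q2 * (p2 * q1) = (p1 * q1) * (p2 * q2) by ring.
    by apply: ler_pM => //; rewrite sqr_ge0.
  move=> h.
  have -> : (2 * u * v) ^+ 2 = 4 * (u * v) ^+ 2 by ring.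
  have hX : 0 <= (p1 * q2 - p2 * q1) ^+ 2 by rewrite sqr_ge0.
  have -> : (p1 * q2 + p2 * q1) ^+ 2 = 4 * (p1 * q2 * (p2 * q1)) + (p1 * q2 - p2 * q1) ^+ 2 by ring.
  by rewrite ler_wpDr // ler_wpM2l.
have h2 : 2 * u * v <= p1 * q2 + p2 * q1.
  rewrite -(ler_pXn2r (_ : 0 < 2)%N) // ?nnegrE //; last by rewrite addr_ge0 // mulr_ge0.
  by rewrite mulr_ge0 // mulr_ge0.
nra.
Qed.

Fixpoint gmrel (m l1 l2 : seq R) : Prop :=
 match m, l1, l2 with
 | [::], [::], [::] => True
 | c :: m', a :: l1', b :: l2' => [/\ 0 < c, 0 < a, 0 < b, c ^+ 2 = a * b & gmrel m' l1' l2']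
 | _, _, _ => False end.

Lemma gm_pos m l1 l2 : gmrel m l1 l2 -> [/\ posl m, posl l1 & posl l2].
Proof.
elim: m l1 l2 => [|c m IH] [|a l1] [|b l2] //= [c0 a0 b0 _ /IH[h1 h2 h3]].
by rewrite c0 a0 b0.
Qed.

Lemma gm_Pl m l1 l2 : gmrel m l1 l2 -> Pl m ^+ 2 = Pl l1 * Pl l2.
Proof.
elim: m l1 l2 => [|c m IH] [|a l1] [|b l2] //=.
case=> c0 a0 b0 e /IH h; rewrite exprMn h exprVn e invfM; ring.
Qed.

Lemma gm_Rb m l1 l2 : gmrel m l1 l2 -> Rb m ^+ 2 <= Rb l1 * Rb l2.
Proof.
elim: m l1 l2 => [|c m IH] [|a l1] [|b l2] //=.
case=> c0 a0 b0 e g; have [pm p1 p2] := gm_pos g.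
have := CS ler01 (Rb_ge0 pm) ler01 ler01 (Rb_ge0 p1) (Rb_ge0 p2) _ (IH _ _ g).
rewrite expr1n mulr1 lexx => /(_ isT) h.
rewrite exprMn exprVn e invfM.
have -> : a^-1 * (1 + Rb l1) * (b^-1 * (1 + Rb l2)) = a^-1 * b^-1 * ((1 + Rb l1) * (1 + Rb l2)) by ring.
by apply: ler_wpM2l => //; rewrite mulr_ge0 // invr_ge0 ltW.
Qed.

Lemma gm_sum m l1 l2 : gmrel m l1 l2 -> (\sum_(x <- m) x) ^+ 2 <= (\sum_(x <- l1) x) * (\sum_(x <- l2) x).
Proof.
elim: m l1 l2 => [|c m IH] [|a l1] [|b l2] //=.
case=> c0 a0 b0 e g; have [pm p1 p2] := gm_pos g.
have sge0 s : posl s -> 0 <= \sum_(x <- s) x.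
  elim: s => [|y s IHs] /=; first by rewrite big_nil.
  by case/andP=> y0 /IHs h; rewrite big_cons addr_ge0 // ltW.
rewrite !big_cons; apply: CS; [exact: ltW | exact: sge0 | exact: ltW | exact: ltW | exact: sge0 | exact: sge0 | by rewrite e | exact: IH _ _ g].
Qed.

Lemma gm_G m l1 l2 : gmrel m l1 l2 -> G m ^+ 2 <= G l1 * G l2.
Proof.
elim: m l1 l2 => [|c m IH] [|a l1] [|b l2] //=.
move=> h; have [pm p1 p2] := @gm_pos (c::m) (a::l1) (b::l2) h.
have hR := @gm_Rb (c::m) (a::l1) (b::l2) h.
case: h => c0 a0 b0 e g; have [qm q1 q2] := gm_pos g.
apply: CS; [exact: (Rb_ge0 pm) | exact: G_ge0 | exact: (Rb_ge0 p1) | exact: (Rb_ge0 p2)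
  | exact: G_ge0 | exact: G_ge0 | exact: hR | exact: IH _ _ g].
Qed.

Lemma gm_F m l1 l2 : gmrel m l1 l2 -> F m ^+ 2 <= F l1 * F l2.
Proof.
move=> g; have [pm p1 p2] := gm_pos g.
have sge0 s : posl s -> 0 <= \sum_(x <- s) x.
  elim: s => [|y s IHs] /=; first by rewrite big_nil.
  by case/andP=> y0 /IHs h; rewrite big_cons addr_ge0 // ltW.
rewrite /F; apply: CS; rewrite ?sge0 ?G_ge0 //; [exact: gm_sum | exact: gm_G].
Qed.

Definition gm (l1 l2 : seq R) := [seq Num.sqrt (p.1 * p.2) | p <- zip l1 l2].

Lemma gmP l1 l2 : size l1 = size l2 -> posl l1 -> posl l2 -> gmrel (gm l1 l2) l1 l2.
Proof.
elim: l1 l2 => [|a l1 IH] [|b l2] //= [e] /andP[a0 p1] /andP[b0 p2].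
split => //; last exact: IH.
  by rewrite sqrtr_gt0 mulr_gt0.
by rewrite sqr_sqrtr // mulr_ge0 // ltW.
Qed.

Lemma gmC l1 l2 : gm l1 l2 = gm l2 l1.
Proof.
elim: l1 l2 => [|a l1 IH] [|b l2] //=; rewrite /gm /= in IH *.
by rewrite IH mulrC.
Qed.

Lemma size_gm l1 l2 : size l1 = size l2 -> size (gm l1 l2) = size l1.
Proof. by move=> e; rewrite size_map size_zip e minnn. Qed.

Lemma gm_rev s : rev (gm s (rev s)) = gm s (rev s).
Proof.
rewrite /gm -map_rev rev_zip ?size_rev // revK.
by rewrite -/(gm (rev s) s) gmC.
Qed.


Definition minl n s := [/\ size s = n, posl s & forall s', size s' = n -> posl s' -> F s <= F s'].

Lemma posl_cat l r : posl (l ++ r) = posl l && posl r.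
Proof. exact: all_cat. Qed.

Lemma stat n l a r : minl n (l ++ a :: r) -> a ^+ 2 = (1 + Le l) * (1 + Rb r).
Proof.
case=> sz; rewrite posl_cat /= => /and3P[pl a0 pr] mn.
set K := (1 + Le l) * (1 + Rb r).
have K0 : 0 < K by rewrite mulr_gt0 // ltr_pwDl // ?Le_ge0 ?Rb_ge0.
set b := Num.sqrt K.
have b0 : 0 < b by rewrite sqrtr_gt0.
have bb : b ^+ 2 = K by rewrite sqr_sqrtr // ltW.
have := mn (l ++ b :: r); rewrite !size_cat /= -(size_cat l (a :: r)) sz posl_cat /= pl b0 pr.
move=> /(_ erefl isT); rewrite !F_ins -/K -bb => h.
have h1 : a + b ^+ 2 / a <= 2 * b.
  have e : b ^+ 2 / b = b by rewrite expr2 mulfK // gt_eqF.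
  rewrite e in h; lra.
have h2 : a * (a + b ^+ 2 / a) = a ^+ 2 + b ^+ 2 by field; rewrite gt_eqF.
have h3 : a ^+ 2 + b ^+ 2 <= a * (2 * b) by rewrite -h2 ler_wpM2l // ltW.
have : (a - b) ^+ 2 <= 0 by nra.
rewrite le_eqVlt ltNge sqr_ge0 orbF sqrf_eq0 subr_eq0 => /eqP ->.
done.
Qed.


Lemma nosteady n l r : minl n (l ++ r) -> Le l = 1 -> Rb r = 1 -> False.
Proof.
elim/last_ind: l r => [|l b IH] r.
  by move=> _ /= /eqP; rewrite eq_sym oner_eq0.
rewrite cat_rcons => hm hL hR.
have hs := stat hm; rewrite hR in hs.
case: (hm) => _; rewrite posl_cat /= => /and3P[pl b0 _] _.
move: hL; rewrite -cats1 Le_cat /= => hL.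
have e1 : 1 + Le l = b.
  move: hL; rewrite add0r !mulr1 => /(congr1 (fun z => b * z)).
  by rewrite mulrDr mulrA mulfV ?gt_eqF // mul1r mulr1.
have b2 : b = 2.
  have : b * (b - 2) = 0 by rewrite mulrBr -expr2 hs e1; ring.
  by move/eqP; rewrite mulf_eq0 gt_eqF //= subr_eq0 => /eqP.
apply: (IH (b :: r) hm).
  by move: e1; rewrite b2; lra.
by rewrite /= hR b2; field.
Qed.

Lemma key n s : (1 <= n)%N -> minl n s -> exists s', [/\ size s' = n.+1, posl s' & F s' < F s + 3].
Proof.
move=> n1 hs; case: (hs) => sz ps mn.
set m := gm s (rev s).
have g : gmrel m s (rev s) by apply: gmP; rewrite ?size_rev // /posl all_rev.
have [pm _ _] := gm_pos g.
have szm : size m = n by rewrite size_gm ?size_rev.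
have Fm : F m <= F s.
  have := gm_F g; rewrite F_rev -!expr2 => h.
  by rewrite -(ler_pXn2r (_ : 0 < 2)%N) // nnegrE F_ge0.
have hm : minl n m by split => // s' h1 h2; apply: le_trans Fm (mn _ h1 h2).
suff [s' [h1 h2 h3]] : exists s', [/\ size s' = n.+1, posl s' & F s' < F m + 3].
  by exists s'; split => //; apply: lt_le_trans h3 _; rewrite lerD2r.
have rm : rev m = m by apply: gm_rev.
have := odd_double_half n; set k := n./2.
case: (odd n) => /= hn.
-
  have kl : (k < size m)%N by rewrite szm -hn -addn1 -addnn; lia.
  set l := take k m; set c := nth 0 m k; set r := drop k.+1 m.
  have em : m = l ++ c :: r by rewrite /l /c /r -drop_nth // cat_take_drop.
  have er : r = rev l.
    by rewrite /r -{1}rm drop_rev szm -hn /l; congr (rev (take _ _)); rewrite -addnn; lia.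
  have hmm : minl n (l ++ c :: r) by rewrite -em.
  have hst := stat hmm.
  rewrite er Rb_rev in hst.
  set a := Le l in hst.
  have pl : posl l by move: pm; rewrite em posl_cat => /andP[].
  have pr : posl r by move: pm; rewrite em posl_cat /= => /and3P[].
  have c0 : 0 < c by move: pm; rewrite em posl_cat /= => /and3P[].
  have a0 : 0 <= a by apply: Le_ge0.
  have ec : c = 1 + a.
    have : (c - (1 + a)) * (c + (1 + a)) = 0 by rewrite -subr_sqr hst expr2 subrr.
    move/eqP; rewrite mulf_eq0 subr_eq0 => /orP[/eqP //|].
    have hp : 0 < c + (1 + a) by apply: addr_gt0 => //; apply: lt_le_trans ltr01 _; rewrite lerDl.
    by rewrite (gt_eqF hp).
  have a1 : a != 1.
    apply/negP => /eqP a1; apply: (nosteady hmm a1).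
    by rewrite /= er ec Rb_rev -/a a1; field.
  set t := (3 + a) / 2.
  have t0 : 0 < t by rewrite /t divr_gt0 // ltr_wpDr.
  exists ((l ++ [:: c]) ++ t :: r); split.
  + by rewrite !size_cat /= -szm em size_cat /= addn1 addSn.
  + by rewrite !posl_cat /= pl c0 t0 pr.
  rewrite em -(cat1s c r) catA F_ins (F_cat (l ++ [:: c]) r).
  have eL : Le (l ++ [:: c]) = 1 by rewrite Le_cat /= -/a ec; field; rewrite gt_eqF // ltr_wpDr.
  rewrite eL er Rb_rev -/a.
  suff : t + (1 + 1) * (1 + a) / t < a + 3 by lra.
  have e2 : t * (t + (1 + 1) * (1 + a) / t) = t ^+ 2 + 2 * (1 + a) by field; rewrite gt_eqF.
  rewrite -(ltr_pM2l t0) e2 /t.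
  have : 0 < (a - 1) ^+ 2 by rewrite lt_def sqr_ge0 andbT sqrf_eq0 subr_eq0 a1.
  move=> h; nra.
-
  set l := take k m; set r := drop k m.
  have em : m = l ++ r by rewrite cat_take_drop.
  have er : r = rev l.
    by rewrite /r -{1}rm drop_rev szm -hn /l; congr (rev (take _ _)); rewrite -addnn; lia.
  set a := Le l.
  have pl : posl l by move: pm; rewrite em posl_cat => /andP[].
  have pr : posl r by move: pm; rewrite em posl_cat => /andP[].
  have a0 : 0 <= a by apply: Le_ge0.
  have hmm : minl n (l ++ r) by rewrite -em.
  have a1 : a != 1.
    by apply/negP => /eqP a1; apply: (nosteady hmm a1); rewrite er Rb_rev.
  have t0 : 0 < 1 + a by rewrite ltr_wpDr.
  exists (l ++ (1 + a) :: r); split.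
  + by rewrite size_cat /= -szm em size_cat addnS.
  + by rewrite posl_cat /= pl t0 pr.
  rewrite em F_ins F_cat er Rb_rev -/a.
  have -> : (1 + a) * (1 + a) / (1 + a) = 1 + a by field; rewrite gt_eqF.
  have : 0 < (a - 1) ^+ 2 by rewrite lt_def sqr_ge0 andbT sqrf_eq0 subr_eq0 a1.
  move=> h; nra.
Qed.

End Lists.
Section Bridge.
Variable R : realType.

Definition sx n (x : 'I_n -> R) := [seq x i | i <- enum 'I_n].

Lemma sxS n (x : 'I_n.+1 -> R) : sx x = x ord0 :: sx (fun i => x (lift ord0 i)).
Proof. by rewrite /sx enum_ordSl /= -map_comp. Qed.

Definition Ts n (x : 'I_n -> R) := \sum_(j < n) \prod_(k < n | (k <= j)%N) (x k)^-1.

Lemma TsS n (x : 'I_n.+1 -> R) :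
  Ts x = (x ord0)^-1 * (1 + Ts (fun i => x (lift ord0 i))).
Proof.
rewrite /Ts big_ord_recl mulrDr mulr1; congr (_ + _).
  by rewrite big_mkcond big_ord_recl /= big1 ?mulr1 // => k _; rewrite lift0.
rewrite mulr_sumr; apply: eq_bigr => j _.
rewrite big_mkcond big_ord_recl /=.
congr (_ * _); rewrite [RHS]big_mkcond; apply: eq_bigr => k _.
by rewrite /bump !add1n ltnS.
Qed.


Lemma fS n (x : 'I_n.+1 -> R) :
  f x = x ord0 + Ts x + f (fun i => x (lift ord0 i)).
Proof.
rewrite /f big_ord_recl [X in _ + X]big_ord_recl.
have -> : \sum_(j < n.+1 | (@nat_of_ord n.+1 ord0 <= j)%N)
     \prod_(k < n.+1 | ((@nat_of_ord n.+1 ord0) <= k <= j)%N) (x k)^-1 = Ts x.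
  by apply: eq_bigr => j _; apply: eq_bigl => k /=.
set S1 := \sum_(i < n) _; set S2 := \sum_(i < n) _.
suff -> : S2 = \sum_(i < n) \sum_(j < n | (i <= j)%N)
     \prod_(k < n | (i <= k <= j)%N) (x (lift ord0 k))^-1 by ring.
rewrite /S2; apply: eq_bigr => i _.
rewrite big_mkcond big_ord_recl /= [RHS]big_mkcond.
rewrite add0r; apply: eq_bigr => j _.
rewrite /bump !add1n ltnS; case: ifP => // ij.
rewrite big_mkcond big_ord_recl /= mul1r [RHS]big_mkcond; apply: eq_bigr => k _.
by rewrite /bump !add1n !ltnS.
Qed.

Lemma Ts_Rb n (x : 'I_n -> R) : Ts x = Rb (sx x).
Proof.
elim: n x => [|n IHn] x.
  have -> : sx x = [::] by apply: size0nil; rewrite size_map size_enum_ord.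
  by rewrite /Ts big_ord0.
by rewrite TsS sxS /= IHn.
Qed.

Lemma f_F n (x : 'I_n -> R) : f x = F (sx x).
Proof.
elim: n x => [|n IH] x.
  have -> : sx x = [::] by apply: size0nil; rewrite size_map size_enum_ord.
  by rewrite /f /F big_nil /= !big_ord0; ring.
rewrite fS sxS IH /F big_cons /= Ts_Rb sxS /=; ring.
Qed.

End Bridge.

Lemma g_cont (R : realType) n (v : 'rV[R]_n) : (forall k, v ord0 k != 0) ->
  {for v, continuous (fun w : 'rV[R]_n => f (fun i => w ord0 i))}.
Proof.
move=> v0; rewrite /f.
apply: continuousD.
  apply: (cvg_big (F := nbhs v) add_continuous) => i _.
  exact: coord_continuous.
apply: (cvg_big (F := nbhs v) add_continuous) => i _.
apply: (cvg_big (F := nbhs v) add_continuous) => j _.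
apply: (cvg_big (F := nbhs v) mul_continuous) => k _.
apply: continuousV => //; exact: coord_continuous.
Qed.

Section Final.
Variable R : realType.

Lemma F_cons (b : R) s : F (b :: s) = b + Rb (b :: s) + F s.
Proof. by rewrite /F big_cons /=; ring. Qed.

Lemma sum_ge0 (s : seq R) : posl s -> 0 <= \sum_(x <- s) x.
Proof.
elim: s => [|y s IHs] /=; first by rewrite big_nil.
by case/andP=> y0 /IHs h; rewrite big_cons addr_ge0 // ltW.
Qed.

Lemma F_elem (s : seq R) a : posl s -> a \in s -> a <= F s /\ a^-1 <= F s.
Proof.
elim: s => [|b s IH] //= /andP[b0 ps]; rewrite inE => /orP[/eqP ->|ins].
  have h1 := F_ge0 ps; have h2 := Rb_ge0 ps.
  have h3 : 0 < b^-1 by rewrite invr_gt0.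
  rewrite F_cons /=; split; first by nra.
  have : b^-1 <= b^-1 * (1 + Rb s) by nra.
  by move=> h; nra.
have [h1 h2] := IH ps ins.
have h3 : 0 <= Rb (b :: s) by apply: (Rb_ge0 (s := b :: s)); rewrite /= b0.
by rewrite F_cons; split; lra.
Qed.

Lemma size_sx n (x : 'I_n -> R) : size (sx x) = n.
Proof. by rewrite size_map size_enum_ord. Qed.

Lemma posl_sx n (x : 'I_n -> R) : (forall i, 0 < x i) -> posl (sx x).
Proof. by move=> h; rewrite /posl all_map; apply/allP => i _ /=. Qed.

Lemma sx_nth n (s : seq R) : size s = n -> sx (fun i : 'I_n => nth 1 s i) = s.
Proof.
move=> e; subst n.
rewrite /sx (map_comp (nth 1 s) val) val_enum_ord.
exact: mkseq_nth.
Qed.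

Lemma nth_pos n (s : seq R) : size s = n -> posl s -> forall i : 'I_n, 0 < nth 1 s i.
Proof.
move=> e ps i; move/allP: ps; apply; apply: mem_nth; rewrite e; exact: ltn_ord.
Qed.

Lemma f_coord n (x : 'I_n -> R) i : (forall k, 0 < x k) -> x i <= f x /\ (x i)^-1 <= f x.
Proof.
move=> h; rewrite f_F; apply: F_elem; first exact: posl_sx.
by apply: map_f; rewrite mem_enum.
Qed.


Local Open Scope classical_set_scope.

Lemma exists_min n : exists x0 : 'I_n -> R,
  (forall i, 0 < x0 i) /\ (forall x : 'I_n -> R, (forall i, 0 < x i) -> f x0 <= f x).
Proof.
pose one := fun _ : 'I_n => (1 : R).
pose M := f one + 1.
have f1 : 0 <= f one by rewrite f_F; apply: F_ge0; apply: posl_sx.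
have M1 : 1 <= M by rewrite /M lerDr.
have M0 : 0 < M by apply: lt_le_trans ltr01 M1.
have Mi : M^-1 <= 1 by rewrite invf_le1.
have Mi0 : 0 < M^-1 by rewrite invr_gt0.
pose B := [set v : 'rV[R]_n | forall i, `[M^-1, M]%classic (v ord0 i)].
have cB : compact B by exact: (@rV_compact _ n (fun=> `[M^-1, M]%classic) (fun=> @segment_compact R M^-1 M)).
have B1 : B (const_mx 1).
  by move=> i /=; rewrite mxE in_itv /= Mi M1.
have B0 : B !=set0 by exists (const_mx 1).
have cont : {within B, continuous (fun w : 'rV[R]_n => f (fun i => w ord0 i))}.
  apply: continuous_in_subspaceT => v; rewrite inE => hv.
  apply: g_cont => k; rewrite gt_eqF //.
  by move: (hv k); rewrite /= in_itv /= => /andP[h _]; apply: lt_le_trans h.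
have [c /[1!inE] cBc cmin] := EVT_min_rV B0 cB cont.
have cpos : forall i, 0 < c ord0 i.
  by move=> i; move: (cBc i); rewrite /= in_itv /= => /andP[h _]; apply: lt_le_trans h.
exists (fun i => c ord0 i); split => // x xpos.
have fc1 : f (fun i => c ord0 i) <= f one.
  have := cmin (const_mx 1); rewrite inE => /(_ B1).
  by have -> : (fun i => (const_mx 1 : 'rV[R]_n) ord0 i) = one by apply: boolp.funext => i; rewrite mxE.
case: (boolP [forall i, (M^-1 <= x i <= M)]) => [/forallP hx | /forallPn [i hi]].
  have := cmin (\row_i x i); rewrite inE => /(_ _).
  have -> : (fun i => (\row_i x i : 'rV[R]_n) ord0 i) = x by apply: boolp.funext => i; rewrite mxE.
  apply => i /=; rewrite mxE in_itv /=; exact: hx.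
apply: (le_trans fc1); have [h1 h2] := f_coord i xpos.
rewrite negb_and -!ltNge in hi; case/orP: hi => hi.
  apply: ltW; apply: lt_le_trans h2; rewrite /M.
  have : M < (x i)^-1.
    by rewrite -[M]invrK ltf_pV2 // posrE // invr_gt0.
  by rewrite /M; lra.
by apply: ltW; apply: lt_le_trans h1; rewrite /M in hi; lra.
Qed.

Lemma A_eq n (x0 : 'I_n -> R) : (forall i, 0 < x0 i) ->
  (forall x : 'I_n -> R, (forall i, 0 < x i) -> f x0 <= f x) -> A R n = f x0.
Proof.
move=> p0 m0; rewrite /A.
set S := [set f x | x in _].
have S0 : S (f x0) by exists x0.
have lb : lbound S (f x0) by move=> _ [x px <-]; apply: m0.
apply/eqP; rewrite eq_le; apply/andP; split.
  by apply: ge_inf => //; exists (f x0).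
by apply: lb_le_inf => //; exists (f x0).
Qed.

End Final.

Theorem proposition1 (R : realType) (n : nat) :
  (1 <= n)%N -> C R n < C R n.+1.
Proof.
move=> n1.
have [x0 [p0 m0]] := exists_min R n.
have [y0 [q0 m1]] := exists_min R n.+1.
have hmin : minl n (sx x0).
  split; [exact: size_sx | exact: posl_sx |] => s' sz ps.
  rewrite -f_F -(sx_nth sz) -f_F; apply: m0; exact: nth_pos.
have [s' [sz ps lt3]] := key n1 hmin.
have h : A R n.+1 < A R n + 3.
  rewrite (A_eq q0 m1) (A_eq p0 m0) (f_F x0).
  apply: (le_lt_trans _ lt3).
  rewrite -(sx_nth sz) -f_F; apply: m1; exact: nth_pos.
rewrite /C -addn1 natrD; lra.
Qed.
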